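(* Let $m\ge5$ be an odd integer and $n=\frac{3^m+1}{4}$. Then $\delta_1=\frac{3^{m-1}-1}{8}$ and $\delta_2=\frac{3^{m-1}-1}{8}-2$ are the largest and the second largest $3$-cyclotomic coset leaders modulo $n$, respectively, and $|C_{\delta_1}|=|C_{\delta_2}|=2m$.
   Context: For $0\le s\le n-1$, $C_s=\{s3^i\bmod n:i\ge0\}$ is the $3$-cyclotomic coset of $s$ modulo $n$; its least element is its coset leader. *)

(* Defs.v *)
From mathcomp Require Import all_boot.
Set Implicit Arguments. Unset Strict Implicit. Unset Printing Implicit Defensive.

Definition in_coset3 (n s t : nat) : Prop := exists i : nat, t = (s * 3 ^ i) %% n.

Definition coset_leader3 (n s : nat) : Prop :=
  s < n /\ forall t, in_coset3 n s t -> s <= t.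

Definition coset_card3 (n s k : nat) : Prop :=
  exists S : seq nat, uniq S /\ size S = k /\ forall t, (t \in S) <-> in_coset3 n s t.

(* Main.v *)
Require Import Defs.
From mathcomp Require Import all_boot.
From mathcomp Require Import zify.
From Stdlib Require Import Classical.

Lemma modn_eq a q n r : r < n -> a = q * n + r -> a %% n = r.
Proof. by move=> hr ->; rewrite modnMDl modn_small. Qed.

Lemma step3 n s i : s * 3 ^ i.+1 %% n = 3 * (s * 3 ^ i %% n) %% n.
Proof. by rewrite modnMmr expnS mulnCA. Qed.

Lemma negm m n y : 3 ^ m + 1 = 4 * n -> 0 < y -> y < n -> y * 3 ^ m %% n = n - y.
Proof.
move=> h hy hyn. apply: (@modn_eq _ (4*y - 1)); first lia.
move: h; set X := 3 ^ m => h.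
have -> : X = 4*n - 1 by lia.
rewrite mulnBr mulnBl muln1 mul1n mulnCA mulnA.
have : y <= y * n by nia. have: n <= 4 * y * n by nia.
lia.
Qed.

Lemma shiftm m n s i : 3 ^ m + 1 = 4 * n -> 0 < s * 3 ^ i %% n ->
  s * 3 ^ (i + m) %% n = n - s * 3 ^ i %% n.
Proof.
move=> h hp. have n0 : 0 < n by lia.
by rewrite expnD mulnA -modnMml negm // ltn_pmod.
Qed.

Definition f n t := ((n < 2 * t) + t) %% 2.

Lemma fstep n t : n %% 2 = 1 -> n < 6 * t -> 6 * t < 5 * n ->
  f n (3 * t %% n) = (f n t).+1 %% 2.
Proof.
move=> h2 h1 h5. rewrite /f.
have [c1|c1] := ltnP (3*t) n.
  rewrite (modn_small c1).
  case: (ltnP n (2*(3*t))) => ?; case: (ltnP n (2*t)) => ? /=; lia.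
have [c2|c2] := ltnP (3*t) (2*n).
  rewrite (@modn_eq (3*t) 1 n (3*t - n)); [|lia|lia].
  case: (ltnP n (2*(3*t - n))) => ?; case: (ltnP n (2*t)) => ? /=; lia.
rewrite (@modn_eq (3*t) 2 n (3*t - 2*n)); [|lia|lia].
case: (ltnP n (2*(3*t - 2*n))) => ?; case: (ltnP n (2*t)) => ? /=; lia.
Qed.

Lemma key m n s : 3 ^ m + 1 = 4 * n -> m %% 2 = 1 -> n %% 2 = 1 -> 0 < s -> s < n ->
  exists i, 6 * (s * 3 ^ i %% n) <= n.
Proof.
move=> h hm hn s0 sn.
apply: NNPP => hno.
have hall : forall i, n < 6 * (s * 3 ^ i %% n).
  move=> i; rewrite ltnNge; apply/negP => hi; apply: hno; by exists i.
have n0 : 0 < n by lia.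
have hup : forall i, 6 * (s * 3 ^ i %% n) < 5 * n.
  move=> i. have := hall (i + m). rewrite shiftm //; last by have := hall i; lia.
  have := ltn_pmod (s * 3 ^ i) n0. lia.
have inv : forall i, f n (s * 3 ^ i %% n) = (f n s + i) %% 2.
  elim=> [|i IH].
    by rewrite expn0 muln1 (modn_small sn) addn0 /f modn_mod.
  rewrite step3 fstep // IH. lia.
have := inv m. rewrite negm // /f.
case: (ltnP n (2*(n - s))) => ?; case: (ltnP n (2*s)) => ? /=; lia.
Qed.

Lemma param m : 5 <= m -> m %% 2 = 1 -> exists u, 0 < u /\ 3 ^ (m - 3) = 8 * u + 1.
Proof.
move=> h5 ho.
have [k hk] : exists k, m - 3 = 2 * k.+1 by exists ((m - 3) %/ 2).-1; lia.
have -> : 3 ^ (m - 3) = 9 ^ k.+1 by rewrite hk expnM.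
have e : (9 ^ k.+1) %% 8 = 1 by rewrite -modnXm (_ : 9 %% 8 = 1) // exp1n.
exists (9 ^ k.+1 %/ 8). have := divn_eq (9 ^ k.+1) 8. rewrite e.
have : 9 <= 9 ^ k.+1 by rewrite expnS leq_pmulr // expn_gt0.
lia.
Qed.

Lemma orbit_all m n s : 3 ^ m + 1 = 4 * n -> 0 < m -> 0 < s -> 2 * s < n ->
  (forall i, 0 < i < m -> s < s * 3 ^ i %% n < n - s) ->
  forall i, (i %% m = 0 -> s * 3 ^ i %% n = s \/ s * 3 ^ i %% n = n - s) /\
            (i %% m != 0 -> s < s * 3 ^ i %% n < n - s).
Proof.
move=> h m0 s0 sn hyp i.
elim/ltn_ind: i => i IH.
have [im|im] := ltnP i m.
  rewrite (modn_small im).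
  case: i im IH => [|i] im IH.
    split=> // _; left. rewrite expn0 muln1 modn_small //; lia.
  split=> // _; apply: hyp; lia.
have -> : i = (i - m) + m by lia.
rewrite modnDr shiftm //; last first.
  have [a b] := IH (i - m) ltac:(lia).
  case: (eqVneq ((i - m) %% m) 0) => e.
    case: (a e) => ->; lia.
  have := b e. lia.
have [a b] := IH (i - m) ltac:(lia).
split=> e.
  case: (a e) => ->; lia.
have := b e; lia.
Qed.

Lemma leader_from m n s : 3 ^ m + 1 = 4 * n -> 0 < m -> 0 < s -> 2 * s < n ->
  (forall i, 0 < i < m -> s < s * 3 ^ i %% n < n - s) -> coset_leader3 n s.
Proof.
move=> h m0 s0 sn hyp. split; first lia.
move=> t [i ->]. have [a b] := @orbit_all _ _ _ h m0 s0 sn hyp i.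
case: (eqVneq (i %% m) 0) => e.
  case: (a e) => ->; lia.
have := b e; lia.
Qed.

Lemma shiftk n s i k : s * 3 ^ (i + k) %% n = (s * 3 ^ i %% n) * 3 ^ k %% n.
Proof. by rewrite expnD mulnA modnMml. Qed.

Lemma card_from m n s : 3 ^ m + 1 = 4 * n -> 0 < m -> 0 < s -> 2 * s < n ->
  (forall i, 0 < i < m -> s < s * 3 ^ i %% n < n - s) -> coset_card3 n s (2 * m).
Proof.
move=> h m0 s0 sn hyp.
have OA := @orbit_all _ _ _ h m0 s0 sn hyp.
have pos : forall i, 0 < s * 3 ^ i %% n.
  move=> i; have [a b] := OA i.
  case: (eqVneq (i %% m) 0) => e.
    case: (a e) => ->; lia.
  have := b e; lia.
have per : forall i, s * 3 ^ (i + 2 * m) %% n = s * 3 ^ i %% n.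
  move=> i. have -> : i + 2 * m = (i + m) + m by lia.
  rewrite shiftm // shiftm //. have n0 : 0 < n by lia.
  have := ltn_pmod (s * 3 ^ i) n0. lia.
have tm : s * 3 ^ m %% n = n - s by rewrite negm //; lia.
have t2m : s * 3 ^ (2 * m) %% n = s.
  have := per 0. rewrite add0n => ->. rewrite expn0 muln1 modn_small //; lia.
exists [seq s * 3 ^ i %% n | i <- iota 0 (2 * m)].
split; last split.
- rewrite map_inj_in_uniq ?iota_uniq //.
  have main : forall i j, i < j -> j < 2 * m -> s * 3 ^ i %% n = s * 3 ^ j %% n -> False.
    move=> i j ij jm eq.
    have E : s * 3 ^ (i + (2 * m - j)) %% n = s.
      rewrite shiftk eq -shiftk. have -> : j + (2 * m - j) = 2 * m by lia. exact: t2m.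
    move: E. have : 0 < i + (2 * m - j) < 2 * m by lia.
    move: (i + (2 * m - j)) => e /andP[e0 e2] E.
    have [a b] := OA e.
    case: (eqVneq (e %% m) 0) => em; last by have := b em; lia.
    have [el|el] := ltnP e m.
      by move: em; rewrite modn_small //; clear -e0; lia.
    have : (e - m) %% m = 0 by rewrite -(modnDr (e - m) m) subnK.
    rewrite modn_small; last by clear -e2 el; lia.
    move=> e1. have eM : e = m by clear -e1 el; lia.
    move: E. rewrite eM tm. clear -sn. lia.
  move=> i j; rewrite !mem_iota /= !add0n => hi hj eq.
  case: (ltngtP i j) => // c.
    by case: (main i j c hj eq).
  by case: (main j i c hi (esym eq)).
- by rewrite size_map size_iota.
- move=> t; split.
    by case/mapP=> i _ ->; exists i.
  case=> i ->.
  have -> : s * 3 ^ i %% n = s * 3 ^ (i %% (2 * m)) %% n.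
    rewrite {1}(divn_eq i (2 * m)).
    elim: (i %/ (2 * m)) => [|q IH]; first by rewrite mul0n add0n.
    by rewrite mulSn (addnC (2 * m)) -addnA (addnC (2 * m)) addnA per.
  apply: map_f. rewrite mem_iota add0n /= ltn_pmod //; lia.
Qed.

Lemma hyp_d1 m n u : 5 <= m -> 3 ^ (m - 3) = 8 * u + 1 -> n = 54 * u + 7 ->
  forall i, 0 < i < m -> 9 * u + 1 < (9 * u + 1) * 3 ^ i %% n < n - (9 * u + 1).
Proof.
move=> h5 hu En.
have e2 : 3 ^ (m - 2) = 3 * 3 ^ (m - 3) by rewrite -expnS; congr (3 ^ _); lia.
have P : forall j, j <= m - 2 -> 2 * ((9 * u + 1) * 3 ^ j.+1 %% n) + 3 ^ j = n.
  elim=> [|j IH] hj.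
    rewrite expn0 expn1 modn_small; lia.
  rewrite step3. have := IH (ltnW hj).
  move: ((9 * u + 1) * 3 ^ j.+1 %% n) => t Ht.
  have hle : 3 ^ j.+1 <= 3 ^ (m - 2) by rewrite leq_exp2l.
  have e3 : 3 ^ j.+1 = 3 * 3 ^ j by rewrite expnS.
  rewrite (@modn_eq (3 * t) 1 n (3 * t - n)); lia.
move=> i /andP[i0 im]. have [j ej] : exists j, i = j.+1 by exists i.-1; lia.
  subst i. try clear T1 T2.
have := P j ltac:(lia).
have : 3 ^ j <= 3 ^ (m - 2) by rewrite leq_exp2l //; lia.
lia.
Qed.

Lemma hyp_d2 m n u : 5 <= m -> 0 < u -> 3 ^ (m - 3) = 8 * u + 1 -> n = 54 * u + 7 ->
  forall i, 0 < i < m -> 9 * u - 1 < (9 * u - 1) * 3 ^ i %% n < n - (9 * u - 1).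
Proof.
move=> h5 u0 hu En.
have e2 : 3 ^ (m - 3) = 3 * 3 ^ (m - 4) by rewrite -expnS; congr (3 ^ _); lia.
have P : forall j, j <= m - 4 -> 2 * ((9 * u - 1) * 3 ^ j.+1 %% n) + 13 * 3 ^ j = n.
  elim=> [|j IH] hj.
    rewrite expn0 expn1 modn_small; lia.
  rewrite step3. have := IH (ltnW hj).
  move: ((9 * u - 1) * 3 ^ j.+1 %% n) => t Ht.
  have hle : 3 ^ j.+1 <= 3 ^ (m - 4) by rewrite leq_exp2l.
  have e3 : 3 ^ j.+1 = 3 * 3 ^ j by rewrite expnS.
  rewrite (@modn_eq (3 * t) 1 n (3 * t - n)); lia.
have T2 : (9 * u - 1) * 3 ^ (m - 2) %% n = 29 * u + 4.
  have -> : m - 2 = (m - 4).+1.+1 by lia.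
  rewrite step3. have := P (m - 4) (leqnn _).
  move: ((9 * u - 1) * 3 ^ (m - 4).+1 %% n) => t Ht.
  rewrite modn_small; lia.
have T1 : (9 * u - 1) * 3 ^ (m - 1) %% n = 33 * u + 5.
  have -> : m - 1 = (m - 2).+1 by lia.
  rewrite step3 T2 (@modn_eq (3 * (29 * u + 4)) 1 n (33 * u + 5)); lia.
move=> i /andP[i0 im].
have [ib|ib] := leqP i (m - 3).
  have [j ej] : exists j, i = j.+1 by exists i.-1; lia.
  subst i. try clear T1 T2.
  have := P j ltac:(lia).
  have : 3 ^ j <= 3 ^ (m - 4) by rewrite leq_exp2l //; lia.
  lia.
have [->|->] : i = m - 2 \/ i = m - 1 by lia.
  rewrite T2; lia.
rewrite T1; lia.
Qed.

Lemma not_leader m n u : 3 ^ m + 1 = 4 * n -> 0 < u -> u < n -> 0 < m ->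
  in_coset3 n (9 * u) u.
Proof.
move=> h u0 un m0. exists (2 * m - 2).
have -> : 9 * u * 3 ^ (2 * m - 2) = u * 3 ^ (m + m).
  have -> : m + m = (2 * m - 2) + 2 by lia.
  rewrite expnD (_ : 3 ^ 2 = 9) //. nia.
rewrite expnD mulnA -modnMml negm // negm //; lia.
Qed.

Theorem lemma18 (m : nat) :
  5 <= m -> odd m ->
  let n := (3 ^ m + 1) %/ 4 in
  let d1 := (3 ^ m.-1 - 1) %/ 8 in
  let d2 := (3 ^ m.-1 - 1) %/ 8 - 2 in
  (coset_leader3 n d1 /\
   (forall s, coset_leader3 n s -> s <= d1)) /\
  (coset_leader3 n d2 /\
   (forall s, coset_leader3 n s -> s != d1 -> s <= d2)) /\
  (coset_card3 n d1 (2 * m) /\ coset_card3 n d2 (2 * m)).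
Proof.
move=> h5 ho n d1 d2.
have hm2 : m %% 2 = 1 by rewrite modn2 ho.
have [u [u0 hu]] := @param _ h5 hm2.
have h3m : 3 ^ m = 27 * (8 * u + 1).
  rewrite -hu mulnC -[27]/(3 ^ 3) -expnD subnK //; lia.
have h3m1 : 3 ^ m.-1 = 9 * (8 * u + 1).
  rewrite -hu mulnC -[9]/(3 ^ 2) -expnD. congr (3 ^ _); lia.
have En : n = 54 * u + 7 by rewrite /n h3m; lia.
have Ed1 : d1 = 9 * u + 1 by rewrite /d1 h3m1; lia.
have Ed2 : d2 = 9 * u - 1 by rewrite /d2 h3m1; lia.
have h4 : 3 ^ m + 1 = 4 * n by rewrite En h3m; lia.
clearbody n d1 d2. subst n d1 d2.
have m0 : 0 < m by lia.
have H1 := @hyp_d1 _ _ _ h5 hu (erefl _).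
have H2 := @hyp_d2 _ _ _ h5 u0 hu (erefl _).
have up : forall s, coset_leader3 (54 * u + 7) s -> s <= 9 * u + 1.
  move=> s [sn hs]. case: (posnP s) => [->|s0] //.
  have [i hi] := @key _ _ _ h4 hm2 ltac:(lia) s0 sn.
  have := hs (s * 3 ^ i %% (54 * u + 7)) (ex_intro _ i erefl). lia.
split; [split|split; [split|split]].
- apply: (@leader_from _ _ _ h4) => //; lia.
- exact: up.
- apply: (@leader_from _ _ _ h4) => //; lia.
- move=> s hl /eqP ne. have := up s hl.
  case: (eqVneq s (9 * u)) => [e|ne2]; last lia.
  case: hl => _ hs. have := hs u. rewrite e => /(_ (@not_leader _ _ _ h4 u0 ltac:(lia) m0)). lia.
- apply: (@card_from _ _ _ h4) => //; lia.
- apply: (@card_from _ _ _ h4) => //; lia.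
Qed.
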